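(* Let $k$ be an uncountable algebraically closed field and let $C_1,C_2$ be noncentral conjugacy classes of $G=SL_2(k)$. There exists $(x_1,x_2)\in C_1\times C_2$ such that $\langle x_1,x_2\rangle$ is Zariski dense in $G$ if and only if it is not the case that both $C_1$ and $C_2$ are classes of involutions modulo the center (i.e. classes whose images in $G/Z(G)$ consist of elements of order $2$). *)

(* Defs.v *)
From HB Require Import structures.
From mathcomp Require Import all_boot all_order all_algebra.
From mathcomp Require Import mpoly.
Set Implicit Arguments. Unset Strict Implicit. Unset Printing Implicit Defensive.
Import GRing.Theory.
Local Open Scope ring_scope.

Definition uncountable (T : Type) : Prop := ~ exists f : T -> nat, injective f.

Definition inSL2 (k : fieldType) (A : 'M[k]_2) : Prop := \det A = 1.

Definition conj_class (k : fieldType) (g x : 'M[k]_2) : Prop :=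
  exists a : 'M[k]_2, inSL2 a /\ x = invmx a *m g *m a.

(* The center of SL_2(k) consists of the scalar matrices in it. *)
Definition central (k : fieldType) (g : 'M[k]_2) : Prop := is_scalar_mx g.

Definition involution_mod_center (k : fieldType) (g : 'M[k]_2) : Prop :=
  ~ central g /\ central (g *m g).

Inductive gen2 (k : fieldType) (x1 x2 : 'M[k]_2) : 'M[k]_2 -> Prop :=
  | gen2_1 : gen2 x1 x2 1%:M
  | gen2_l1 h : gen2 x1 x2 h -> gen2 x1 x2 (x1 *m h)
  | gen2_l2 h : gen2 x1 x2 h -> gen2 x1 x2 (x2 *m h)
  | gen2_li1 h : gen2 x1 x2 h -> gen2 x1 x2 (invmx x1 *m h)
  | gen2_li2 h : gen2 x1 x2 h -> gen2 x1 x2 (invmx x2 *m h).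

(* Coordinates of a 2x2 matrix in affine 4-space: (a00, a01, a10, a11). *)
Definition mx_coords (k : fieldType) (A : 'M[k]_2) (i : 'I_4) : k :=
  A (inord (i %/ 2)) (inord (i %% 2)).

Definition zariski_dense_SL2 (k : fieldType) (H : 'M[k]_2 -> Prop) : Prop :=
  forall p : {mpoly k[4]},
    (forall h, H h -> p.@[mx_coords h] = 0) ->
    forall g, inSL2 g -> p.@[mx_coords g] = 0.

(* Main.v *)
Require Import Defs.
From HB Require Import structures.
From mathcomp Require Import all_boot all_order all_algebra.
From mathcomp Require Import mpoly.
From mathcomp Require Import ring.
From Stdlib Require Import Classical.
Set Implicit Arguments. Unset Strict Implicit. Unset Printing Implicit Defensive.
Import GRing.Theory.
Local Open Scope ring_scope.

Section Mk2.
Variable k : fieldType.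
Definition mk2 (a b c d : k) : 'M[k]_2 :=
  \matrix_(i, j) if (i : nat) == 0%N then (if (j : nat) == 0%N then a else b)
                 else (if (j : nat) == 0%N then c else d).

Lemma mk2E (A : 'M[k]_2) : A = mk2 (A 0 0) (A 0 1) (A 1 0) (A 1 1).
Proof.
apply/matrixP => i j; rewrite mxE.
by case: i => [[|[|//]] Hi]; case: j => [[|[|//]] Hj]; congr (A _ _); apply/val_inj.
Qed.

Lemma mk2_inj a b c d a' b' c' d' : mk2 a b c d = mk2 a' b' c' d' ->
  [/\ a = a', b = b', c = c' & d = d'].
Proof.
move=> /matrixP H.
have := H 0 0; have := H 0 1; have := H 1 0; have := H 1 1.
by rewrite !mxE /= => -> -> -> ->.
Qed.

Lemma mulmk2 a b c d a' b' c' d' :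
  mk2 a b c d *m mk2 a' b' c' d' =
  mk2 (a * a' + b * c') (a * b' + b * d') (c * a' + d * c') (c * b' + d * d').
Proof.
apply/matrixP => i j; rewrite !mxE !big_ord_recr big_ord0 /= !mxE /= add0r.
by case: i => [[|[|//]] Hi]; case: j => [[|[|//]] Hj].
Qed.

Lemma detmk2 a b c d : \det (mk2 a b c d) = a * d - b * c.
Proof.
rewrite (expand_det_row _ 0) !big_ord_recr big_ord0 /= add0r.
rewrite /cofactor !mxE /=.
rewrite !det_mx11 /= !mxE /=; rewrite !(add0n, addn0, expr0, expr1); ring.
Qed.

Lemma mk2_1 : (1%:M : 'M[k]_2) = mk2 1 0 0 1.
Proof. by rewrite {1}(mk2E 1%:M) !mxE. Qed.

Lemma mk2_scalar a : (a%:M : 'M[k]_2) = mk2 a 0 0 a.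
Proof. by rewrite {1}(mk2E a%:M) !mxE. Qed.


Lemma trmk2 a b c d : \tr (mk2 a b c d) = a + d.
Proof. by rewrite /mxtrace !big_ord_recr big_ord0 !mxE /= add0r. Qed.

Lemma invmk2 a b c d : a * d - b * c = 1 ->
  invmx (mk2 a b c d) = mk2 d (-b) (-c) a.
Proof.
move=> H.
have U : mk2 a b c d \in unitmx by rewrite unitmxE detmk2 H unitr1.
have E : mk2 a b c d *m mk2 d (-b) (-c) a = 1%:M.
  rewrite mulmk2 mk2_1; congr mk2; rewrite -?H; ring.
by rewrite -[RHS](mulKmx U) E mulmx1.
Qed.

Lemma scalar_mk2 a b c d : is_scalar_mx (mk2 a b c d) <-> [/\ b = 0, c = 0 & a = d].
Proof.
split.
  by move=> /is_scalar_mxP [x]; rewrite mk2_scalar => /mk2_inj [-> -> -> ->].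
by move=> [-> -> ->]; rewrite -mk2_scalar scalar_mx_is_scalar.
Qed.

Lemma coords_mk2 a b c d (i : 'I_4) :
  mx_coords (mk2 a b c d) i = nth 0 [:: a; b; c; d] i.
Proof.
rewrite /mx_coords mxE.
case: i => [[|[|[|[|//]]]] Hi] /=; rewrite !inordK //.
Qed.
End Mk2.

Section Closure.
Variable k : fieldType.
Variable H : 'M[k]_2 -> Prop.
Hypothesis Hmul : forall a b, H a -> H b -> H (a *m b).

Definition inS g := forall p : {mpoly k[4]},
  (forall h, H h -> p.@[mx_coords h] = 0) -> p.@[mx_coords g] = 0.

Lemma inS_H h : H h -> inS h.
Proof. by move=> Hh p Hp; apply: Hp. Qed.

Lemma idx_lt (j r : nat) : (j < 2)%N -> (r < 2)%N -> (j * 2 + r < 4)%N.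
Proof. by case: j => [|[|//]]; case: r => [|[|//]]. Qed.

Lemma comp_left (g : 'M[k]_2) : exists lq : 4.-tuple {mpoly k[4]},
  forall y i, (tnth lq i).@[mx_coords y] = mx_coords (g *m y) i.
Proof.
exists [tuple \sum_(j < 2) (g (inord (i %/ 2)) j)%:MP * 'X_(inord (j * 2 + i %% 2)) | i < 4].
move=> y i; rewrite tnth_mktuple raddf_sum /= /mx_coords mxE.
apply: eq_bigr => j _; rewrite mevalM mevalC mevalXU.
have Hr : (i %% 2 < 2)%N by rewrite ltn_mod.
rewrite inordK ?idx_lt //.
by rewrite divnMDl // modnMDl (divn_small Hr) addn0 modn_mod inord_val.
Qed.

Lemma comp_right (g : 'M[k]_2) : exists lq : 4.-tuple {mpoly k[4]},
  forall y i, (tnth lq i).@[mx_coords y] = mx_coords (y *m g) i.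
Proof.
exists [tuple \sum_(j < 2) (g j (inord (i %% 2)))%:MP * 'X_(inord ((i %/ 2) * 2 + j)) | i < 4].
move=> y i; rewrite tnth_mktuple raddf_sum /= /mx_coords mxE.
apply: eq_bigr => j _; rewrite mevalM mevalC mevalXU mulrC.
have Hr : (i %/ 2 < 2)%N by rewrite ltn_divLR //; case: i.
rewrite inordK ?idx_lt //.
have Hj : (j < 2)%N by [].
by rewrite divnMDl // modnMDl (divn_small Hj) addn0 (modn_small Hj) inord_val.
Qed.

Lemma polyL g (p : {mpoly k[4]}) : exists q : {mpoly k[4]},
  forall y, q.@[mx_coords y] = p.@[mx_coords (g *m y)].
Proof.
have [lq Hlq] := comp_left g; exists (p \mPo lq) => y.
by rewrite comp_mpoly_meval; apply: meval_eq => i; apply: Hlq.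
Qed.

Lemma polyR g (p : {mpoly k[4]}) : exists q : {mpoly k[4]},
  forall y, q.@[mx_coords y] = p.@[mx_coords (y *m g)].
Proof.
have [lq Hlq] := comp_right g; exists (p \mPo lq) => y.
by rewrite comp_mpoly_meval; apply: meval_eq => i; apply: Hlq.
Qed.

Lemma inS_mulH g h : inS g -> H h -> inS (g *m h).
Proof.
move=> Sg Hh p Hp; have [q Hq] := polyR h p.
rewrite -Hq; apply: Sg => y Hy; rewrite Hq; apply: Hp; exact: Hmul.
Qed.

Lemma inS_mul g h : inS g -> inS h -> inS (g *m h).
Proof.
move=> Sg Sh p Hp; have [q Hq] := polyL g p.
rewrite -Hq; apply: Sh => y Hy; rewrite Hq; exact: (inS_mulH Sg Hy).
Qed.

End Closure.

Section Torus.
Variable k : fieldType.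
Definition Dg (u : k) := mk2 u 0 0 u^-1.

Lemma laurent (p : {mpoly k[4]}) : exists (Q : {poly k}) (N : nat),
  forall u, u != 0 -> Q.[u] = u ^+ N * p.@[mx_coords (Dg u)].
Proof.
elim/mpolyind: p => [|c m p _ _ [Q [N HQ]]].
  by exists 0, 0%N => u _; rewrite meval0 horner0 mulr0.
set e0 := m ord0; set e1 := m (lift ord0 ord0); set e2 := m (lift ord0 (lift ord0 ord0)).
set e3 := m (lift ord0 (lift ord0 (lift ord0 ord0))).
exists ((c * 0 ^+ e1 * 0 ^+ e2) *: 'X^e0 * 'X^N + Q * 'X^e3), (e3 + N)%N.
move=> u u0.
rewrite mevalD mevalZ mevalX !big_ord_recl big_ord0 !coords_mk2 /= mulr1.
rewrite hornerD !hornerM hornerZ !hornerXn HQ //.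
rewrite -/(Dg u) -/e0 -/e1 -/e2 -/e3.
set a := u ^+ e3; set b := u^-1 ^+ e3; set z1 := (0 : k) ^+ e1; set z2 := (0 : k) ^+ e2.
set pv := p.@[_].
have Hab : a * b = 1 by rewrite /a /b exprVn mulfV // expf_neq0.
rewrite exprD -/a.
transitivity (c * z1 * z2 * u ^+ e0 * u ^+ N * (a * b) + u ^+ N * pv * a).
  by rewrite Hab mulr1.
ring.
Qed.

Lemma DgM u v : u != 0 -> v != 0 -> Dg u *m Dg v = Dg (u * v).
Proof. by move=> ? ?; rewrite /Dg mulmk2; congr mk2; rewrite ?invfM; ring. Qed.

Variable H : 'M[k]_2 -> Prop.

Lemma torus_closure (t : k) : t != 0 -> (forall n, (0 < n)%N -> t ^+ n != 1) ->
  (forall n, inS H (Dg (t ^+ n))) -> forall u, u != 0 -> inS H (Dg u).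
Proof.
move=> t0 tn HD u u0 p Hp.
have [Q [N HQ]] := laurent p.
have Q0 : Q = 0.
  case: (eqVneq Q 0) => // Qn0; exfalso.
  have := max_poly_roots (rs := mkseq (fun n => t ^+ n) (size Q)) Qn0.
  rewrite size_mkseq ltnn => H0; suff : false by []; apply: H0.
    apply/allP => x /mapP [n _ ->]; rewrite /root HQ ?expf_neq0 //.
    by rewrite (HD n p Hp) mulr0.
  rewrite map_inj_in_uniq ?iota_uniq //.
  move=> i j _ _ Eij; apply/eqP; rewrite -/(_ == _).
  wlog lij : i j Eij / (i <= j)%N.
    by move=> W; case: (leqP i j) => [|/ltnW] l; [|rewrite eq_sym]; apply: W.
  rewrite eqn_leq lij /= leqNgt; apply/negP => lt_ij.
  have := tn (j - i)%N; rewrite subn_gt0 lt_ij => /(_ isT); apply/negP; rewrite negbK.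
  have : t ^+ i * t ^+ (j - i) = t ^+ i * 1 by rewrite -exprD subnKC // Eij mulr1.
  by move/(mulfI (expf_neq0 i t0)) => ->.
have := HQ u u0; rewrite Q0 horner0 => /esym /eqP; rewrite mulf_eq0 expf_eq0 (negbTE u0) andbF /=.
by move/eqP.
Qed.
End Torus.

Section Closed.
Variable k : closedFieldType.

Lemma sqrt_exists (z : k) : exists v, v ^+ 2 = z.
Proof.
have : size ('X^2 - z%:P) != 1 by rewrite size_XnsubC.
move/closed_rootP => [v]; rewrite /root hornerD hornerN hornerXn hornerC subr_eq0.
by move/eqP; exists v.
Qed.

Lemma root_in_list (P : {poly k}) (t : k) : P != 0 -> P.[t] = 0 ->
  t \in sval (closed_field_poly_normal P).
Proof.
case: (closed_field_poly_normal P) => r /= HP P0 Pt.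
rewrite -root_prod_XsubC; move: Pt; rewrite {1}HP hornerZ => /eqP.
by rewrite mulf_eq0 lead_coef_eq0 (negbTE P0).
Qed.

Lemma exists_good : uncountable k -> forall R : {poly k}, R != 0 ->
  exists t, R.[t] != 0 /\ forall n, (0 < n)%N -> t ^+ n != 1.
Proof.
move=> unc R R0; apply: NNPP => Hno; apply: unc.
pose P (n : nat) : {poly k} := if n == 0%N then R else 'X^n - 1.
have P0 n : P n != 0.
  rewrite /P; case: (n =P 0%N) => // /eqP n0; apply/eqP => E.
  have := congr1 (horner^~ 0) E; rewrite hornerD hornerN hornerXn expr0n (negbTE n0) horner0 sub0r.
  by move/eqP; rewrite oppr_eq0 hornerC oner_eq0.
have Hall t : exists n, (P n).[t] == 0.
  case: (eqVneq R.[t] 0) => [Rt|Rt]; first by exists 0%N; rewrite /P eqxx Rt.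
  case: (classic (exists n, (0 < n)%N /\ t ^+ n = 1)) => [[n [n0 tn]]|nex].
    exists n; rewrite /P; case: (n =P 0%N) => [n0'|_]; first by rewrite n0' in n0.
    by rewrite hornerD hornerN hornerXn hornerC tn subrr.
  exfalso; apply: Hno; exists t; split => // n n0; apply/eqP => tn; apply: nex; by exists n.
pose f t := let n := ex_minn (Hall t) in
  pickle (n, index t (sval (closed_field_poly_normal (P n)))).
exists f => t t' /(pcan_inj pickleK) [].
case: ex_minnP => n /eqP Hn _; case: ex_minnP => n' /eqP Hn' _ En; subst n'.
move=> Ei.
rewrite -(nth_index 0 (root_in_list (P0 n) Hn)) Ei.
by rewrite nth_index // root_in_list.
Qed.
End Closed.

Lemma gen2_mul (k : fieldType) (x1 x2 a b : 'M[k]_2) :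
  gen2 x1 x2 a -> gen2 x1 x2 b -> gen2 x1 x2 (a *m b).
Proof.
elim => [|h _ IH|h _ IH|h _ IH|h _ IH] Hb; rewrite ?mul1mx // -mulmxA; constructor; exact: IH.
Qed.

Section Unip.
Variable k : closedFieldType.
Hypothesis unc : uncountable k.
Variable H : 'M[k]_2 -> Prop.
Hypothesis Hmul : forall a b, H a -> H b -> H (a *m b).
Hypothesis H1 : H 1%:M.

Definition up (z : k) := mk2 1 z 0 1.
Definition lo (z : k) := mk2 1 0 z 1.

Lemma fill (F : k -> 'M[k]_2) (kap : k) :
  (forall z1 z2, F z1 *m F z2 = F (z1 + z2)) ->
  (forall z, z != kap -> inS H (F z)) -> forall z, inS H (F z).
Proof.
move=> FM HF z.
have R0 : ('X - kap%:P) * ('X - (z - kap)%:P) != 0.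
  by rewrite mulf_neq0 // polyXsubC_eq0.
have [z1 [Rz1 _]] := exists_good unc R0.
move: Rz1; rewrite hornerM !hornerXsubC mulf_eq0 negb_or !subr_eq0 => /andP [n1 n2].
have -> : z = z1 + (z - z1) by rewrite addrC subrK.
rewrite -FM; apply: inS_mul => //; apply: HF => //.
apply: contra n2 => /eqP <-; by rewrite opprB addrC subrK.
Qed.

Lemma unip (e f : k) : e != 0 -> f != 0 ->
  inS H (mk2 e f (- f^-1) 0) -> inS H (mk2 0 (-f) (f^-1) e) ->
  (forall u, u != 0 -> inS H (Dg u)) ->
  (forall z, inS H (up z)) /\ (forall z, inS H (lo z)).
Proof.
move=> e0 f0 SE SF SD; split.
  apply: (@fill up (e * f)).
    by move=> z1 z2; rewrite /up mulmk2; congr mk2; ring.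
  move=> z zn.
  have [u Hu] := sqrt_exists (1 - z / (e * f)).
  have u0 : u != 0.
    apply: contra zn => /eqP u0; apply/eqP.
    have E : z / (e * f) = 1.
      by move: Hu; rewrite u0 expr0n /= => /eqP; rewrite eq_sym subr_eq0 => /eqP ->.
    by rewrite -[z](divfK (mulf_neq0 e0 f0)) E mul1r.
  have Hz : z = e * f * (1 - u ^+ 2).
    by rewrite Hu; field; rewrite f0 e0.
  have -> : up z = Dg u *m (mk2 e f (- f^-1) 0 *m Dg u *m mk2 0 (-f) (f^-1) e).
    rewrite /up /Dg !mulmk2 Hz; congr mk2; field; rewrite ?u0 ?f0 //.
  apply: inS_mul => //; first exact: SD.
  apply: inS_mul => //; apply: inS_mul => //; exact: SD.
apply: (@fill lo (- (e / f))).
  by move=> z1 z2; rewrite /lo mulmk2; congr mk2; ring.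
move=> z zn.
have ef0 : - (e / f) != 0 by rewrite oppr_eq0 mulf_neq0 ?invr_eq0.
have [u Hu] := sqrt_exists (1 - z / (- (e / f))).
have u0 : u != 0.
  apply: contra zn => /eqP u0; apply/eqP.
  have E : z / (- (e / f)) = 1.
    by move: Hu; rewrite u0 expr0n /= => /eqP; rewrite eq_sym subr_eq0 => /eqP ->.
  by rewrite -[z](divfK ef0) E mul1r.
have Hz : z = - (e / f) * (1 - u ^+ 2).
  by rewrite Hu; field; rewrite oppr_eq0 f0 e0.
have -> : lo z = mk2 0 (-f) (f^-1) e *m Dg u *m mk2 e f (- f^-1) 0 *m Dg u.
  rewrite /lo /Dg !mulmk2 Hz; congr mk2; field; rewrite ?u0 ?f0 //.
apply: inS_mul => //; last exact: SD.
apply: inS_mul => //; apply: inS_mul => //; exact: SD.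
Qed.

Lemma all_from_unip : (forall z, inS H (up z)) -> (forall z, inS H (lo z)) ->
  forall g, inSL2 g -> inS H g.
Proof.
move=> Su Sl.
have big p q r s : r != 0 -> p * s - q * r = 1 -> inS H (mk2 p q r s).
  move=> r0 det.
  have Hq : q = (p * s - 1) / r by rewrite -det; field.
  have -> : mk2 p q r s = up ((p - 1) / r) *m lo r *m up ((s - 1) / r).
    by rewrite /up /lo !mulmk2 Hq; congr mk2; field.
  by apply: inS_mul => //; apply: inS_mul => //.
move=> g; rewrite /inSL2 (mk2E g) detmk2.
set p := g 0 0; set q := g 0 1; set r := g 1 0; set s := g 1 1 => det.
case: (eqVneq r 0) => [r0|r0]; last exact: big.
have p0 : p != 0.
  by apply/eqP => p0; move: det; rewrite p0 r0 mul0r mulr0 subrr => /eqP; rewrite eq_sym oner_eq0.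
have -> : mk2 p q r s = lo (-1) *m (lo 1 *m mk2 p q r s).
  have -> : lo (-1) *m (lo 1 *m mk2 p q r s) = (lo (-1) *m lo 1) *m mk2 p q r s by rewrite mulmxA.
  have -> : lo (-1) *m lo 1 = 1%:M by rewrite /lo mulmk2 mk2_1; congr mk2; ring.
  by rewrite mul1mx.
apply: inS_mul => //; rewrite /lo mulmk2; apply: big.
  by rewrite r0 !mul1r addr0.
rewrite r0; move: det; rewrite r0 => det.
by transitivity (p * s - q * 0); [ring | exact: det].
Qed.
End Unip.

Section Conj.
Variable k : closedFieldType.

Lemma companion (x : 'M[k]_2) : inSL2 x -> ~ central x ->
  exists P : 'M[k]_2, \det P = 1 /\ x *m P = P *m mk2 0 (-1) 1 (\tr x).
Proof.
rewrite /inSL2 /central (mk2E x) detmk2 trmk2 scalar_mk2.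
set p := x 0 0; set q := x 0 1; set r := x 1 0; set s := x 1 1 => det nc.
have hqr : q * r = p * s - 1 by rewrite -det; ring.
have hrq : r * q = p * s - 1 by rewrite mulrC.
suff [P0 [d0 HP0]] : exists P0, \det P0 != 0 /\
    mk2 p q r s *m P0 = P0 *m mk2 0 (-1) 1 (p + s).
  have [mu Hmu] := sqrt_exists (\det P0)^-1.
  exists (mu *: P0); split.
    by rewrite detZ Hmu mulVf.
  by rewrite -scalemxAr HP0 scalemxAl.
case: (eqVneq r 0) => [r0|r0].
  case: (eqVneq q 0) => [q0|q0].
    have ps : p != s by apply/eqP => ps; apply: nc.
    exists (mk2 1 p 1 s); rewrite detmk2 mulr1 mul1r subr_eq0 eq_sym; split => //.
    rewrite !mulmk2 r0 q0; move: det; rewrite r0 q0 mulr0 subr0 => hps; congr mk2.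
    - by ring.
    - by transitivity (p * p + (p * s - 1)); [rewrite hps subrr; ring | ring].
    - by ring.
    - by transitivity (s * s + (p * s - 1)); [rewrite hps subrr; ring | ring].
  exists (mk2 0 q 1 s); rewrite detmk2 mul0r mulr1 sub0r oppr_eq0; split => //.
  rewrite !mulmk2; congr mk2; rewrite ?hrq; ring.
exists (mk2 1 p 0 r); rewrite detmk2 mul1r mulr0 subr0; split => //.
rewrite !mulmk2; congr mk2; rewrite ?hqr; ring.
Qed.

Lemma unit_det1 (A : 'M[k]_2) : \det A = 1 -> A \in unitmx.
Proof. by move=> d; rewrite unitmxE d unitr1. Qed.

Lemma conj_of (g x : 'M[k]_2) : inSL2 g -> inSL2 x -> ~ central g -> ~ central x ->
  \tr g = \tr x -> conj_class g x.
Proof.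
move=> sg sx ng nx tr.
have [P [dP HP]] := companion sx nx.
have [Q [dQ HQ]] := companion sg ng.
rewrite tr in HQ.
set C := mk2 0 (-1) 1 (\tr x) in HP HQ.
have uP := unit_det1 dP; have uQ := unit_det1 dQ.
set a := Q *m invmx P.
have da : \det a = 1 by rewrite det_mulmx det_inv dP dQ invr1 mulr1.
have ua := unit_det1 da.
have Px : invmx P *m x = C *m invmx P.
  rewrite -[LHS]mulmx1 -(mulmxV uP) !mulmxA -(mulmxA _ x) HP.
  by rewrite mulmxA mulVmx // mul1mx.
have ax : a *m x = g *m a.
  by rewrite /a -mulmxA Px mulmxA HQ mulmxA.
exists a; split => //.
by rewrite -mulmxA -ax mulKmx.
Qed.

Lemma conj_tr_det (g x : 'M[k]_2) : conj_class g x -> \tr x = \tr g /\ \det x = \det g.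
Proof.
move=> [a [da ->]]; have ua := unit_det1 da; split.
  by rewrite mxtrace_mulC mulmxA mulmxV // mul1mx.
by rewrite !det_mulmx det_inv da invr1 mul1r mulr1.
Qed.

Lemma inv_iff (g : 'M[k]_2) : ~ central g ->
  (involution_mod_center g <-> \tr g = 0).
Proof.
rewrite /involution_mod_center /central (mk2E g) trmk2 mulmk2 !scalar_mk2.
set p := g 0 0; set q := g 0 1; set r := g 1 0; set s := g 1 1 => nc.
split.
  move=> [_ [h1 h2 h3]].
  apply/eqP; apply/negP => /negP t0.
  have q0 : q = 0.
    have : q * (p + s) = 0 by rewrite -h1; ring.
    by move/eqP; rewrite mulf_eq0 (negbTE t0) orbF => /eqP.
  have r0 : r = 0.
    have : r * (p + s) = 0 by rewrite -h2; ring.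
    by move/eqP; rewrite mulf_eq0 (negbTE t0) orbF => /eqP.
  apply: nc; split => //.
  have : (p - s) * (p + s) = 0 by rewrite q0 r0 in h3; transitivity (p * p + 0 * 0 - (0 * 0 + s * s)); [ring | rewrite h3 subrr].
  by move/eqP; rewrite mulf_eq0 (negbTE t0) orbF subr_eq0 => /eqP.
move=> t0; split => //.
have -> : s = - p by apply/eqP; rewrite -(subr_eq0 s) opprK addrC t0.
split; ring.
Qed.
End Conj.

Lemma mk2_00 (k : fieldType) (a b c d : k) : mk2 a b c d 0 0 = a. Proof. by rewrite mxE. Qed.
Lemma mk2_01 (k : fieldType) (a b c d : k) : mk2 a b c d 0 1 = b. Proof. by rewrite mxE. Qed.
Lemma mk2_10 (k : fieldType) (a b c d : k) : mk2 a b c d 1 0 = c. Proof. by rewrite mxE. Qed.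
Lemma mk2_11 (k : fieldType) (a b c d : k) : mk2 a b c d 1 1 = d. Proof. by rewrite mxE. Qed.

Lemma nz_at0 (k : fieldType) (P : {poly k}) : P.[0] != 0 -> P != 0.
Proof. by move=> h; apply: contraNneq h => ->; rewrite horner0. Qed.

Section Construct.
Variable k : closedFieldType.
Hypothesis unc : uncountable k.

Lemma construct (t1 t2 : k) : ~ (t1 = 0 /\ t2 = 0) ->
  exists x1 x2 : 'M[k]_2, [/\ inSL2 x1, inSL2 x2, ~ central x1 & ~ central x2] /\
    [/\ \tr x1 = t1, \tr x2 = t2 & zariski_dense_SL2 (gen2 x1 x2)].
Proof.
move=> nt.
pose G : {poly k} := (t1 *: 'X^2 - t2 *: 'X) * (t2 *: 'X - t1%:P).
pose W : {poly k} := 'X^2 - 1.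
pose F : {poly k} := t2 *: 'X - t1%:P.
pose R := 'X * F * (W ^+ 2 - G) * (W ^+ 2 - G *+ 2).
have HG x : G.[x] = (t1 * x ^+ 2 - t2 * x) * (t2 * x - t1).
  by rewrite /G hornerM !hornerD !hornerN !hornerZ hornerXn hornerX hornerC.
have HW x : W.[x] = x ^+ 2 - 1.
  by rewrite /W hornerD hornerN hornerXn hornerC.
have HF x : F.[x] = t2 * x - t1.
  by rewrite /F hornerD hornerN hornerZ hornerX hornerC.
have R0 : R != 0.
  rewrite !mulf_neq0 ?polyX_eq0 //.
  - apply/eqP => F0; apply: nt.
    have h0 := congr1 (horner^~ 0) F0; have h1 := congr1 (horner^~ 1) F0.
    move: h0 h1; rewrite /= !HF !horner0 mulr0 sub0r => /eqP; rewrite oppr_eq0 => /eqP h0.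
    by rewrite h0 subr0 mulr1.
  - apply: nz_at0; rewrite hornerD hornerN horner_exp HW HG.
    have -> : ((0 : k) ^+ 2 - 1) ^+ 2 - (t1 * 0 ^+ 2 - t2 * 0) * (t2 * 0 - t1) = 1 by ring.
    exact: oner_neq0.
  - apply: nz_at0; rewrite hornerD hornerN hornerMn horner_exp HW HG.
    have -> : ((0 : k) ^+ 2 - 1) ^+ 2 - ((t1 * 0 ^+ 2 - t2 * 0) * (t2 * 0 - t1)) *+ 2 = 1 by ring.
    exact: oner_neq0.
have [t [Rt tn]] := exists_good unc R0.
have [t0 Ft W1 W2] : [/\ t != 0, t2 * t - t1 != 0,
   (t ^+ 2 - 1) ^+ 2 - (t1 * t ^+ 2 - t2 * t) * (t2 * t - t1) != 0 &
   (t ^+ 2 - 1) ^+ 2 - ((t1 * t ^+ 2 - t2 * t) * (t2 * t - t1)) *+ 2 != 0].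
  move: Rt; rewrite /R !hornerM hornerX HF !hornerD !hornerN hornerMn !horner_exp HW HG.
  by rewrite !mulf_eq0 !negb_or => /andP[/andP[/andP[-> ->] ->] ->].
have w0 : t ^+ 2 - 1 != 0 by rewrite subr_eq0 tn.
pose d := (t2 * t - t1) / (t ^+ 2 - 1).
pose a := t1 - d.
have d0 : d != 0 by rewrite mulf_neq0 ?invr_eq0.
have ad_eq : a * d * (t ^+ 2 - 1) ^+ 2 = (t1 * t ^+ 2 - t2 * t) * (t2 * t - t1).
  by rewrite /a /d; field.
have c0 : a * d - 1 != 0.
  apply: contra W1 => /eqP c0; apply/eqP.
  have -> : (t ^+ 2 - 1) ^+ 2 - (t1 * t ^+ 2 - t2 * t) * (t2 * t - t1) =
    - ((a * d - 1) * (t ^+ 2 - 1) ^+ 2) by rewrite -ad_eq; ring.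
  by rewrite c0 mul0r oppr0.
have c2 : 1 - (a * d) *+ 2 != 0.
  apply: contra W2 => /eqP c2; apply/eqP.
  have -> : (t ^+ 2 - 1) ^+ 2 - ((t1 * t ^+ 2 - t2 * t) * (t2 * t - t1)) *+ 2 =
    (1 - (a * d) *+ 2) * (t ^+ 2 - 1) ^+ 2 by rewrite -ad_eq; ring.
  by rewrite c2 mul0r.
pose A := mk2 a 1 (a * d - 1) d.
have detA : \det A = 1 by rewrite /A detmk2; ring.
have invA : invmx A = mk2 d (-1) (- (a * d - 1)) a by rewrite /A invmk2 //; ring.
have uA := unit_det1 detA.
exists A, (invmx A *m Dg t); split; first split.
- exact: detA.
- by rewrite /inSL2 det_mulmx det_inv detA invr1 mul1r /Dg detmk2 mulr0 subr0 mulfV.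
- by rewrite /central /A scalar_mk2 => [[/eqP]]; rewrite oner_eq0.
- rewrite /central invA /Dg mulmk2 scalar_mk2 => [[/eqP]].
  by rewrite mulr0 add0r mulN1r oppr_eq0 invr_eq0 (negbTE t0).
split.
- by rewrite /A trmk2 /a subrK.
- rewrite invA /Dg mulmk2 trmk2 /a /d; field.
  by rewrite w0 t0.
set H := gen2 A (invmx A *m Dg t).
have Hmul : forall x y, H x -> H y -> H (x *m y) by move=> x y; apply: gen2_mul.
have H1 : H 1%:M by exact: gen2_1.
have HA : H A by have := gen2_l1 H1; rewrite mulmx1.
have HiA : H (invmx A) by have := gen2_li1 H1; rewrite mulmx1.
have x1x2 : A *m (invmx A *m Dg t) = Dg t by rewrite mulKVmx.
have HDn n : H (Dg (t ^+ n)).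
  elim: n => [|n IH].
    by rewrite expr0 /Dg invr1 -mk2_1.
  have := gen2_l1 (gen2_l2 IH); rewrite mulmxA x1x2 DgM ?expf_neq0 //.
  by rewrite -exprS.
have SD : forall u, u != 0 -> inS H (Dg u).
  by apply: (@torus_closure _ H t t0 tn) => n; apply: inS_H.
have [v Hv] := sqrt_exists (- (d ^+ 2) / (a * d - 1)).
have v0 : v != 0.
  apply/eqP => v0; move: Hv; rewrite v0 expr0n /= => /eqP; rewrite eq_sym.
  by rewrite mulf_eq0 invr_eq0 (negbTE c0) orbF oppr_eq0 expf_eq0 (negbTE d0) andbF.
pose E := A *m Dg v *m A.
have E11 : E 1 1 = 0.
  rewrite /E /A /Dg !mulmk2 mk2_11.
  transitivity (((a * d - 1) * v ^+ 2 + d ^+ 2) / v); first by field; rewrite ?c0 ?v0 ?d0 ?w0 ?t0.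
  by rewrite Hv; field; rewrite ?c0 ?v0 ?d0 ?w0 ?t0.
have E00 : E 0 0 != 0.
  have : E 0 0 * v * (a * d - 1) = 1 - (a * d) *+ 2.
    rewrite /E /A /Dg !mulmk2 mk2_00.
    transitivity (a ^+ 2 * (a * d - 1) * v ^+ 2 + (a * d - 1) ^+ 2); first by field; rewrite ?c0 ?v0 ?d0 ?w0 ?t0.
    by rewrite Hv; field; rewrite ?c0 ?v0 ?d0 ?w0 ?t0.
  by move=> h; apply: contra c2 => /eqP e0; rewrite -h e0 !mul0r.
have dE : \det E = 1.
  by rewrite /E !det_mulmx detA /Dg detmk2 mulr0 subr0 mulfV // !mul1r.
move: dE; rewrite (mk2E E) detmk2 E11 mulr0 sub0r.
set e := E 0 0; set f := E 0 1; set g := E 1 0 => dE.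
have f0 : f != 0 by apply/eqP => f0; move: dE; rewrite f0 mul0r oppr0 => /eqP; rewrite eq_sym oner_eq0.
have gE : g = - f^-1.
  apply: (mulfI f0); rewrite mulrN mulfV //; by rewrite -dE opprK.
have SE : inS H (mk2 e f (- f^-1) 0).
  rewrite -gE -E11 -(mk2E E) /E; apply: inS_mul => //; last exact: inS_H.
  by apply: inS_mul => //; [exact: inS_H | exact: SD].
have SF : inS H (mk2 0 (-f) (f^-1) e).
  have dEm : e * 0 - f * (- f^-1) = 1 by rewrite mulr0 sub0r mulrN opprK mulfV.
  have EEm : E = mk2 e f (- f^-1) 0 by rewrite {1}(mk2E E) E11 -gE.
  have uE : E \in unitmx by apply: unit_det1; rewrite EEm detmk2.
  have EF : E *m (invmx A *m Dg v^-1 *m invmx A) = 1%:M.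
    rewrite /E invA /A /Dg !mulmk2 mk2_1; congr mk2; field; by rewrite ?v0 ?oner_eq0.
  have -> : mk2 0 (-f) (f^-1) e = invmx A *m Dg v^-1 *m invmx A.
    by rewrite -[RHS](mulKmx uE) EF mulmx1 EEm invmk2 // opprK.
  apply: inS_mul => //; last exact: inS_H.
  by apply: inS_mul => //; [exact: inS_H | apply: SD; rewrite invr_eq0].
have [Su Sl] := unip unc Hmul E00 f0 SE SF SD.
have Sall := all_from_unip Hmul Su Sl.
by move=> p Hp g' sg; apply: (Sall g' sg p Hp).
Qed.
End Construct.

Section Forward.
Variable k : closedFieldType.
Hypothesis unc : uncountable k.

Lemma sq_tr0 (x : 'M[k]_2) : \det x = 1 -> \tr x = 0 -> x *m x = - 1%:M.
Proof.
rewrite (mk2E x) detmk2 trmk2 mulmk2 mk2_1.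
set p := x 0 0; set q := x 0 1; set r := x 1 0; set s := x 1 1 => det t0.
have -> : s = - p by apply/eqP; rewrite -(subr_eq0 s) opprK addrC t0.
move: det; have -> : s = - p by apply/eqP; rewrite -(subr_eq0 s) opprK addrC t0.
move=> det.
apply/matrixP => i j; rewrite !mxE.
have hqr : q * r = - 1 - p * p by rewrite -det; ring.
by case: i => [[|[|//]] Hi]; case: j => [[|[|//]] Hj] /=; rewrite ?hqr ?(mulrC r q) ?hqr; ring.
Qed.

Lemma anti_tr0 (x y : 'M[k]_2) : \tr x = 0 -> \tr y = 0 ->
  y *m x = (\tr (x *m y)) *: 1%:M - x *m y.
Proof.
rewrite (mk2E x) (mk2E y) !trmk2 !mulmk2 trmk2 mk2_1.
set p := x 0 0; set q := x 0 1; set r := x 1 0; set s := x 1 1.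
set p' := y 0 0; set q' := y 0 1; set r' := y 1 0; set s' := y 1 1 => t0 t0'.
have -> : s = - p by apply/eqP; rewrite -(subr_eq0 s) opprK addrC t0.
have -> : s' = - p' by apply/eqP; rewrite -(subr_eq0 s') opprK addrC t0'.
apply/matrixP => i j; rewrite !mxE.
by case: i => [[|[|//]] Hi]; case: j => [[|[|//]] Hj] /=; ring.
Qed.

Variables x1 x2 : 'M[k]_2.
Hypotheses (d1 : \det x1 = 1) (d2 : \det x2 = 1) (tr1 : \tr x1 = 0) (tr2 : \tr x2 = 0).

Definition Inv (h : 'M[k]_2) :=
  (exists al be, h = al *: 1%:M + be *: (x1 *m x2)) \/ (exists al be, h = al *: x1 + be *: x2).

Let sq1 := sq_tr0 d1 tr1.
Let sq2 := sq_tr0 d2 tr2.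
Let an := anti_tr0 tr1 tr2.
Let sg := \tr (x1 *m x2).

Lemma inv1 (x1' : 'M[k]_2) : (x1' = x1) -> True. Proof. by []. Qed.

Lemma Inv_x1 h : Inv h -> Inv (x1 *m h).
Proof.
case=> [] [al [be ->]].
  right; exists al, (- be).
  rewrite mulmxDr -!scalemxAr mulmx1 mulmxA sq1 mulNmx mul1mx.
  by apply/matrixP => i j; rewrite !mxE; ring.
left; exists (- al), be.
rewrite mulmxDr -!scalemxAr sq1.
by apply/matrixP => i j; rewrite !mxE; ring.
Qed.

Lemma Inv_x2 h : Inv h -> Inv (x2 *m h).
Proof.
case=> [] [al [be ->]].
  right; exists be, (al + be * sg).
  rewrite mulmxDr -!scalemxAr mulmx1 mulmxA an mulmxBl -scalemxAl mul1mx -mulmxA sq2.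
  rewrite mulmxN mulmx1 -/sg.
  by apply/matrixP => i j; rewrite !mxE; ring.
left; exists (al * sg - be), (- al).
rewrite mulmxDr -!scalemxAr sq2 an -/sg.
by apply/matrixP => i j; rewrite !mxE; ring.
Qed.

Lemma invmx_tr0 (x : 'M[k]_2) : \det x = 1 -> \tr x = 0 -> invmx x = - x.
Proof.
move=> dx tx; have ux := unit_det1 dx.
rewrite -[RHS](mulKmx ux) mulmxN sq_tr0 // !mulmxN mulmx1.
by apply/matrixP => i j; rewrite !mxE opprK.
Qed.

Lemma Inv_neg h : Inv h -> Inv (- h).
Proof.
case=> [] [al [be ->]]; [left|right]; exists (- al), (- be);
  by apply/matrixP => i j; rewrite !mxE; ring.
Qed.

Lemma Inv_gen h : gen2 x1 x2 h -> Inv h.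
Proof.
elim => [|{}h _ IH|{}h _ IH|{}h _ IH|{}h _ IH].
- by left; exists 1, 0; rewrite scale1r scale0r addr0.
- exact: Inv_x1.
- exact: Inv_x2.
- by rewrite invmx_tr0 // mulNmx; apply/Inv_neg/Inv_x1.
- by rewrite invmx_tr0 // mulNmx; apply/Inv_neg/Inv_x2.
Qed.

Lemma Inv_tr h : Inv h -> \tr h * \tr (h *m x1) = 0.
Proof.
case=> [] [al [be ->]].
  rewrite mulmxDl -!scalemxAl mul1mx mxtraceD !mxtraceZ tr1 mxtrace_mulC mulmxA sq1.
  by rewrite mulNmx mul1mx raddfN /= tr2 oppr0 !mulr0 addr0 mulr0.
by rewrite mxtraceD !mxtraceZ tr1 tr2 !mulr0 addr0 mul0r.
Qed.

End Forward.

Section ND.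
Variable k : closedFieldType.
Hypothesis unc : uncountable k.

Lemma not_dense (x1 x2 : 'M[k]_2) : \det x1 = 1 -> \det x2 = 1 -> \tr x1 = 0 ->
  \tr x2 = 0 -> ~ zariski_dense_SL2 (gen2 x1 x2).
Proof.
move=> d1 d2 t1 t2 dense.
pose i0 : 'I_4 := inord 0; pose i1 : 'I_4 := inord 1.
pose i2 : 'I_4 := inord 2; pose i3 : 'I_4 := inord 3.
pose P : {mpoly k[4]} := ('X_i0 + 'X_i3) * ((x1 0 0)%:MP * 'X_i0 + (x1 1 0)%:MP * 'X_i1
   + (x1 0 1)%:MP * 'X_i2 + (x1 1 1)%:MP * 'X_i3).
have PE h : P.@[mx_coords h] = \tr h * \tr (h *m x1).
  rewrite /P mevalM !mevalD !mevalM !mevalC !mevalXU [in LHS](mk2E h) !coords_mk2.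
  rewrite /i0 /i1 /i2 /i3 !inordK //=.
  rewrite [in RHS](mk2E h) [in RHS](mk2E x1) mulmk2 !trmk2; ring.
have Pvan : forall h, gen2 x1 x2 h -> P.@[mx_coords h] = 0.
  by move=> h Hh; rewrite PE; exact: (Inv_tr d1 t1 t2 (Inv_gen d1 d2 t1 t2 Hh)).
move: d1 t1 PE; rewrite [in \det _](mk2E x1) [in \tr x1](mk2E x1) detmk2 trmk2.
set p := x1 0 0; set q := x1 0 1; set r := x1 1 0; set s := x1 1 1 => d1 t1 PE.
have sE : s = - p by apply/eqP; rewrite -(subr_eq0 s) opprK addrC t1.
pose Q : {poly k} := r *: 'X^2 + p *: 'X - q%:P.
have HQ z : Q.[z] = r * z ^+ 2 + p * z - q.
  by rewrite /Q !hornerD hornerN !hornerZ hornerXn hornerX hornerC.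
have Q0 : Q != 0.
  apply/eqP => Q0; move: d1.
  have c0 := congr1 (fun P : {poly k} => P`_0) Q0.
  have c1 := congr1 (fun P : {poly k} => P`_1) Q0.
  have c2 := congr1 (fun P : {poly k} => P`_2) Q0.
  move: c0 c1 c2; rewrite /Q /= !coefD !coefN !coefZ !coefXn !coefX !coefC /= ?coef0.
  rewrite !mulr0 !mulr1 !subr0 !add0r ?addr0 => /eqP; rewrite oppr_eq0 => /eqP -> -> ->.
  by rewrite sE !mul0r subrr => /eqP; rewrite eq_sym oner_eq0.
have R0 : 'X * Q != 0 by rewrite mulf_neq0 ?polyX_eq0.
have [z [Rz _]] := exists_good unc R0.
move: Rz; rewrite hornerM hornerX HQ mulf_eq0 negb_or => /andP [z0 Qz].
pose g0 := mk2 1 z (- z^-1) 0.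
have sg0 : inSL2 g0 by rewrite /inSL2 /g0 detmk2 mulr0 sub0r mulrN opprK mulfV.
have := dense P Pvan g0 sg0; rewrite PE /g0 (mk2E x1) mulmk2 !trmk2 -/p -/q -/r -/s.
move/eqP; apply/negP.
have -> : (1 + 0) * (1 * p + z * r + (- z^-1 * q + 0 * s)) = (r * z ^+ 2 + p * z - q) / z.
  by field.
by rewrite mulf_eq0 negb_or Qz invr_eq0 z0.
Qed.
End ND.

Unset Implicit Arguments.

Theorem lemma3p10 (k : closedFieldType) (hk : uncountable k)
  (g1 g2 : 'M[k]_2) (hg1 : inSL2 g1) (hg2 : inSL2 g2)
  (nc1 : ~ central g1) (nc2 : ~ central g2) :
  (exists x1 x2 : 'M[k]_2,
      conj_class g1 x1 /\ conj_class g2 x2 /\ zariski_dense_SL2 (gen2 x1 x2))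
  <-> ~ (involution_mod_center g1 /\ involution_mod_center g2).
Proof.
split.
  move=> [x1 [x2 [c1 [c2 dense]]]] [i1 i2].
  have [tx1 dx1] := conj_tr_det c1; have [tx2 dx2] := conj_tr_det c2.
  have e1 := (proj1 (inv_iff nc1)) i1; have e2 := (proj1 (inv_iff nc2)) i2.
  apply: (not_dense hk _ _ _ _ dense).
  - by rewrite dx1.
  - by rewrite dx2.
  - by rewrite tx1.
  - by rewrite tx2.
move=> ninv.
have nt : ~ (\tr g1 = 0 /\ \tr g2 = 0).
  by move=> [a b]; apply: ninv; split; [apply/(inv_iff nc1) | apply/(inv_iff nc2)].
have [x1 [x2 [[s1 s2 n1 n2] [t1 t2 dense]]]] := construct hk nt.
exists x1, x2; split; [|split] => //; apply: conj_of => //; by rewrite ?t1 ?t2.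
Qed.
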